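(* Let $\alpha\in(0,1)$, $R>0$, and let $V(\lambda)$ be the maximal Phase-II observation time when at the contact time $t_2$ the target is on the boundary of the observation disk with relative bearing $\lambda\in[-\pi,\pi]$. Then $V(\lambda)=0$ whenever $\lambda\in[\cos^{-1}(-\alpha),\pi]\cup[-\pi,-\cos^{-1}(-\alpha)]$.
   Context: Target: position $(0,y_T(t))$, $\dot y_T=1$. Observer: position $(x_O(t),y_O(t))$, $\dot x_O=\alpha\cos\psi(t)$, $\dot y_O=\alpha\sin\psi(t)$, heading $\psi$ a measurable control. Contact with bearing $\lambda$ at time $t_2$ means $\big(x_O(t_2),y_O(t_2)-y_T(t_2)\big)=R(\sin\lambda,\cos\lambda)$. For a control on $[t_2,\infty)$, $t_f=\inf\{t\ge t_2: x_O(t)^2+(y_O(t)-y_T(t))^2>R^2\}$ and the observation time is $t_f-t_2$; $V(\lambda)$ is the supremum of $t_f-t_2$ over all controls. *)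

(* Defs.v *)
From HB Require Import structures.
From mathcomp Require Import all_boot all_order all_algebra.
From mathcomp Require Import all_classical all_reals all_analysis.
Set Implicit Arguments. Unset Strict Implicit. Unset Printing Implicit Defensive.
Import Order.TTheory GRing.Theory Num.Theory.
Import numFieldNormedType.Exports.
Local Open Scope classical_set_scope.
Local Open Scope ring_scope.

Section Pursuit.
Variable R : realType.

(* Target position: (0, yT t), yT' = 1, with yT t2 = y2. *)
Definition yT (t2 y2 t : R) : R := y2 + (t - t2).

(* Observer position, obtained by integrating xO' = alpha cos psi,
   yO' = alpha sin psi from the contact time t2, where at t2 the relative
   position (xO, yO - yT) equals Rd (sin lam, cos lam). *)
Definition xO (alpha Rd lam t2 : R) (psi : R -> R) (t : R) : R :=
  Rd * sin lam + \int[lebesgue_measure]_(s in `[t2, t]) (alpha * cos (psi s)).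
Definition yO (alpha Rd lam t2 y2 : R) (psi : R -> R) (t : R) : R :=
  y2 + Rd * cos lam + \int[lebesgue_measure]_(s in `[t2, t]) (alpha * sin (psi s)).

Definition exit_time (alpha Rd lam t2 y2 : R) (psi : R -> R) : \bar R :=
  ereal_inf [set t%:E | t in [set t : R | t2 <= t /\
     xO alpha Rd lam t2 psi t ^+ 2 + (yO alpha Rd lam t2 y2 psi t - yT t2 y2 t) ^+ 2
       > Rd ^+ 2]].

Definition Vobs (alpha Rd lam t2 y2 : R) : \bar R :=
  ereal_sup [set (exit_time alpha Rd lam t2 y2 psi - t2%:E)%E |
     psi in [set psi : R -> R | measurable_fun setT psi]].

End Pursuit.

(* Main.v *)
Require Import Defs.
From HB Require Import structures.
From mathcomp Require Import all_boot all_order all_algebra.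
From mathcomp Require Import all_classical all_reals all_analysis.
From mathcomp Require Import measurable_realfun.
From mathcomp Require Import lra ring.
Import Order.TTheory GRing.Theory Num.Theory.
Import numFieldNormedType.Exports.
Local Open Scope classical_set_scope.
Local Open Scope ring_scope.
Section S.
Variable R : realType.
Notation mu := (@lebesgue_measure R).

Lemma mu_itv (t2 t : R) : t2 <= t -> mu `[t2, t] = (t - t2)%:E.
Proof.
move=> h; have := lebesgue_measure_itv `[t2, t] => /= ->.
case: ifP => /=; first by rewrite -EFinD.
rewrite lte_fin => /negbT; rewrite -leNgt => ht.
have -> : t = t2 by apply/eqP; rewrite eq_le h ht.
by rewrite subrr.
Qed.

Lemma intg_trig (psi : R -> R) (h : R -> R) (c t2 t : R) :
  measurable_fun setT psi -> continuous h -> (forall x, `|h x| <= 1) ->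
  mu.-integrable `[t2, t] (EFin \o (fun s => c * h (psi s))).
Proof.
move=> mpsi ch hb.
apply: measurable_bounded_integrable => //.
- have := lebesgue_measure_itv `[t2, t] => /= ->.
  by case: ifP => _ //; rewrite -EFinD ltry.
- apply: measurableT_comp; first by apply: continuous_measurable_fun; exact: mulrl_continuous.
  apply: measurableT_comp; first exact: continuous_measurable_fun.
  exact: measurable_funS mpsi.
- exists `|c|; split => // M HM x _.
  rewrite /= normrM; apply: le_trans (ltW HM).
  by rewrite -[leRHS]mulr1 ler_wpM2l.
Qed.

Lemma intg_cst (c t2 t : R) :
  mu.-integrable `[t2, t] (EFin \o (fun _ : R => c)).
Proof.
apply: measurable_bounded_integrable => //.
- have := lebesgue_measure_itv `[t2, t] => /= ->.
  by case: ifP => _ //; rewrite -EFinD ltry.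
- exists `|c|; split => // M HM x _.
  by rewrite /= (ltW HM).
Qed.

Lemma hnorm_cos : forall x : R, `|cos x| <= 1.
Proof. by move=> x; rewrite ler_norml cos_geN1 cos_le1. Qed.
Lemma hnorm_sin : forall x : R, `|sin x| <= 1.
Proof. by move=> x; rewrite ler_norml sin_geN1 sin_le1. Qed.

Lemma key (alpha Rd lam t2 y2 : R) (psi : R -> R) (t : R) :
  0 < alpha < 1 -> 0 < Rd -> cos lam <= - alpha -> measurable_fun setT psi ->
  t2 < t ->
  Rd ^+ 2 < xO alpha Rd lam t2 psi t ^+ 2 + (yO alpha Rd lam t2 y2 psi t - yT t2 y2 t) ^+ 2.
Proof.
move=> /andP[a0 a1] R0 hc mpsi tt.
rewrite /xO /yO /yT.
set A := Rintegral _ _ _.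
set B := Rintegral _ _ _.
have iA := intg_trig psi cos alpha t2 t mpsi (@continuous_cos R) hnorm_cos.
have iB := intg_trig psi sin alpha t2 t mpsi (@continuous_sin R) hnorm_sin.
have mD : measurable (`[t2, t] : set R) by [].
have hmu : fine (mu `[t2, t]) = t - t2 by rewrite mu_itv ?ltW.
have hB : B <= alpha * (t - t2).
  rewrite -hmu -Rintegral_cst //.
  apply: le_Rintegral => //; first exact: intg_cst.
  by move=> x _; rewrite -[leRHS]mulr1; apply: ler_wpM2l; [exact: ltW|exact: sin_le1].
have iA' : mu.-integrable `[t2, t] (EFin \o (fun x => sin lam * (alpha * cos (psi x)))).
  have := intg_trig psi cos (sin lam * alpha) t2 t mpsi (@continuous_cos R) hnorm_cos. apply: eq_integrable => //. move=> x _ /=; by rewrite mulrA.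
have iB' : mu.-integrable `[t2, t] (EFin \o (fun x => cos lam * (alpha * sin (psi x)))).
  have := intg_trig psi sin (cos lam * alpha) t2 t mpsi (@continuous_sin R) hnorm_sin. apply: eq_integrable => //. move=> x _ /=; by rewrite mulrA.
have hS : \int[mu]_(x in `[t2,t]) (- alpha) <= \int[mu]_(x in `[t2,t]) (sin lam * (alpha * cos (psi x)) + cos lam * (alpha * sin (psi x))).
  apply: le_Rintegral => //; first exact: intg_cst.
    have := @integrableD _ _ _ mu `[t2, t]%classic ltac:(by []) _ _ iA' iB'. apply: eq_integrable => //.
  move=> x _.
  have := sin_geN1 (lam + psi x); rewrite sinD => h.
  nra.
rewrite Rintegral_cst // hmu RintegralD // (@RintegralZl _ _ _ mu `[t2, t]%classic _ (sin lam) ltac:(by []) iA) (@RintegralZl _ _ _ mu `[t2, t]%classic _ (cos lam) ltac:(by []) iB) in hS.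
have hsc := cos2Dsin2 lam.
set s := sin lam in hS hsc *; set c := cos lam in hS hc hsc *.
set tau := t - t2 in hS hB *.
have htau : 0 < tau by rewrite /tau subr_gt0.
have h0 : 0 <= (- alpha - c) * tau by apply: mulr_ge0; lra.
have {}hS : - alpha * tau <= s * A + c * B := hS.
have h1 : 0 <= s * A + c * B - c * tau by lra.
have h3 : B < tau by nra.
have h2 : 0 < (B - tau) ^+ 2 by rewrite -sqrrN opprB exprn_gt0 // subr_gt0.
have -> : y2 + Rd * c + B - (y2 + tau) = Rd * c + (B - tau) by ring.
nra.
Qed.

Lemma cos_bound (alpha lam : R) : 0 < alpha < 1 ->
  (acos (- alpha) <= lam <= pi \/ - pi <= lam <= - acos (- alpha)) ->
  cos lam <= - alpha.
Proof.
move=> /andP[a0 a1] hl.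
have hin : -1 <= - alpha <= 1 by apply/andP; split; lra.
have a_ge0 := acos_ge0 hin.
have a_le := acos_lepi hin.
have ca : cos (acos (- alpha)) = - alpha by rewrite acosK // in_itv /=.
have Hm : forall x, acos (- alpha) <= x <= pi -> cos x <= - alpha.
  move=> x /andP[h1 h2]; rewrite -ca leNgt ltr_cos ?in_itv /= ?a_ge0 ?a_le ?h2 -?leNgt //.
  by rewrite (le_trans a_ge0 h1).
case: hl => [|/andP[h1 h2]]; first exact: Hm.
rewrite -cosN; apply: Hm; apply/andP; split; lra.
Qed.

Lemma exit_t2 (alpha Rd lam t2 y2 : R) (psi : R -> R) :
  0 < alpha < 1 -> 0 < Rd -> cos lam <= - alpha -> measurable_fun setT psi ->
  exit_time alpha Rd lam t2 y2 psi = t2%:E.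
Proof.
move=> ha hR hc mpsi.
apply/eqP; rewrite eq_le; apply/andP; split.
  apply/lee_addgt0Pr => e e0.
  apply: ge_ereal_inf; exists (t2 + e)%:E => //.
  exists (t2 + e) => //; split; first by lra.
  by apply: key => //; lra.
apply: le_ereal_inf_tmp => _ [t [ht _] <-].
by rewrite lee_fin.
Qed.

End S.

Theorem lemma4 (R : realType) (alpha Rd lam t2 y2 : R) :
  0 < alpha < 1 -> 0 < Rd -> -pi <= lam <= pi ->
  (acos (- alpha) <= lam <= pi \/ - pi <= lam <= - acos (- alpha)) ->
  Vobs alpha Rd lam t2 y2 = 0%E.
Proof.
move=> ha hR _ hl.
have hc := @cos_bound R _ _ ha hl.
rewrite /Vobs.
have -> : [set (exit_time alpha Rd lam t2 y2 psi - t2%:E)%E |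
     psi in [set psi : R -> R | measurable_fun setT psi]] = [set 0%E].
  apply/seteqP; split.
    move=> _ [psi mpsi <-].
    by rewrite /= exit_t2 // -EFinB subrr.
  move=> _ ->; exists (fun _ => 0) => /=; first exact: measurable_cst.
  by rewrite exit_t2 // -EFinB subrr.
exact: ereal_sup1.
Qed.
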